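(* The map $P:\mu^{-1}(0)^{rss}\to\{(x_1,\dots,x_n,y_1,\dots,y_n)\in\mathbb{C}^{2n}: x_\iota\ne x_\gamma\text{ for }\iota\ne\gamma\}$, $(r,s,i,j)\mapsto(r_{11},\dots,r_{nn},s'_{11},\dots,s'_{nn})$ with $s'_{\iota\iota}=\operatorname{tr}(L^\iota(r)s)$, is a well-defined regular, $B$-invariant, surjective map that separates orbit closures (points of $\mu^{-1}(0)^{rss}$ whose $B$-orbit closures in $\mu^{-1}(0)^{rss}$ are disjoint have distinct images).
   Context: $B\subset GL_n(\mathbb{C})$ is the group of invertible upper triangular matrices, $\mathfrak{b}$ the upper triangular matrices, $\mathfrak{n}^+$ the strictly upper triangular matrices, $\mathfrak{b}^*=\mathfrak{gl}_n/\mathfrak{n}^+$, $(\mathbb{C}^n)^*$ row vectors. $B$ acts on $T^*(\mathfrak{b}\times\mathbb{C}^n)=\mathfrak{b}\times\mathfrak{b}^*\times\mathbb{C}^n\times(\mathbb{C}^n)^*$ by $b\cdot(r,s,i,j)=(brb^{-1},bsb^{-1},bi,jb^{-1})$, with moment map $\mu(r,s,i,j)=[r,s]+ij \bmod\mathfrak{n}^+\in\mathfrak{b}^*$. $\mu^{-1}(0)^{rss}$ is the set of $(r,s,i,j)\in\mu^{-1}(0)$ such that $r$ has pairwise distinct eigenvalues (diagonal entries). For such $r$ put $l_k(r)=r-r_{kk}I$ and $L^\iota(r)=\big[\operatorname{tr}\prod_{k\ne\iota}l_k(r)\big]^{-1}\prod_{k\ne\iota}l_k(r)$, an upper triangular matrix;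 $\operatorname{tr}(L^\iota(r)s)$ is well defined for $s\in\mathfrak{gl}_n/\mathfrak{n}^+$. *)

(* Defs.v *)
(* The complex numbers are R[i] for an
   arbitrary R : realType (i.e. a model of the reals), with its Euclidean
   (norm) topology; matrix spaces and products carry the product topology. *)
From mathcomp Require Import all_boot all_order all_algebra.
From mathcomp Require Import complex.
From mathcomp Require Import all_classical all_reals all_analysis.
Import numFieldNormedType.Exports.
Set Implicit Arguments. Unset Strict Implicit. Unset Printing Implicit Defensive.
Import Order.TTheory GRing.Theory Num.Theory.
Local Open Scope ring_scope.
Local Open Scope classical_set_scope.

Definition Cplx (R : realType) : numFieldType := R[i].

Section Defs.
Variables (R : realType) (n : nat).
Local Notation C := (Cplx R).

(* the ambient space  b x b^* x C^n x (C^n)^*.  An element of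
   b^* = gl_n / n^+ is represented by its canonical representative,
   a lower triangular matrix (entries (a,c) with c <= a). *)
Definition bquad := ('M[C]_n * 'M[C]_n * 'cV[C]_n * 'rV[C]_n)%type.

Definition pr_r (x : bquad) : 'M[C]_n := x.1.1.1.
Definition pr_s (x : bquad) : 'M[C]_n := x.1.1.2.
Definition pr_i (x : bquad) : 'cV[C]_n := x.1.2.
Definition pr_j (x : bquad) : 'rV[C]_n := x.2.

Definition upper (M : 'M[C]_n) : Prop := forall a c : 'I_n, (c < a)%N -> M a c = 0.
Definition lower (M : 'M[C]_n) : Prop := forall a c : 'I_n, (a < c)%N -> M a c = 0.
(* the projection gl_n -> gl_n / n^+ (kill the strictly upper part) *)
Definition modnp (M : 'M[C]_n) : 'M[C]_n :=
  \matrix_(a, c) if (c <= a)%N then M a c else 0.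

Definition inB (b : 'M[C]_n) : Prop := upper b /\ b \in unitmx.

Definition act (b : 'M[C]_n) (x : bquad) : bquad :=
  (b *m pr_r x *m invmx b, modnp (b *m pr_s x *m invmx b),
   b *m pr_i x, pr_j x *m invmx b).

Definition mu (x : bquad) : 'M[C]_n :=
  modnp (pr_r x *m pr_s x - pr_s x *m pr_r x + pr_i x *m pr_j x).

Definition rss_zero : set bquad :=
  [set x | upper (pr_r x) /\ lower (pr_s x) /\ mu x = 0 /\
           forall a c : 'I_n, a != c -> pr_r x a a != pr_r x c c].

Definition lk (r : 'M[C]_n) (k : 'I_n) : 'M[C]_n := r - (r k k)%:M.
Definition Lprod (r : 'M[C]_n) (iota : 'I_n) : 'M[C]_n :=
  \prod_(k < n | k != iota) lk r k.
Definition Lmat (r : 'M[C]_n) (iota : 'I_n) : 'M[C]_n :=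
  (\tr (Lprod r iota))^-1 *: Lprod r iota.

Definition sprime (r s : 'M[C]_n) (iota : 'I_n) : C := \tr (Lmat r iota *m s).

Definition Pmap (x : bquad) : 'rV[C]_n * 'rV[C]_n :=
  (\row_k pr_r x k k, \row_k sprime (pr_r x) (pr_s x) k).

Inductive polyfun : (bquad -> C) -> Prop :=
  | pf_const (c : C) : polyfun (fun _ => c)
  | pf_r (a c : 'I_n) : polyfun (fun x => pr_r x a c)
  | pf_s (a c : 'I_n) : polyfun (fun x => pr_s x a c)
  | pf_i (a : 'I_n) : polyfun (fun x => pr_i x a 0)
  | pf_j (a : 'I_n) : polyfun (fun x => pr_j x 0 a)
  | pf_add f g : polyfun f -> polyfun g -> polyfun (fun x => f x + g x)
  | pf_mul f g : polyfun f -> polyfun g -> polyfun (fun x => f x * g x).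

Definition regular_on (D : set bquad) (F : bquad -> C) : Prop :=
  exists f g, polyfun f /\ polyfun g /\
    forall x, D x -> g x != 0 /\ F x = f x / g x.

Definition Borbit (x : bquad) : set bquad := [set act b x | b in inB].

End Defs.

(* Main.v *)
Set Warnings "-notation-overridden,-ambiguous-paths,-notation-incompatible-prefix".
Require Import Defs.
From mathcomp Require Import all_boot all_order all_algebra.
From mathcomp Require Import complex.
From mathcomp Require Import all_classical all_reals all_analysis.
From mathcomp Require Import zify.
From Stdlib Require Import Lia.
Import numFieldNormedType.Exports.
Import Order.TTheory GRing.Theory Num.Theory.
Local Open Scope ring_scope.
Local Open Scope classical_set_scope.
Set Implicit Arguments. Unset Strict Implicit. Unset Printing Implicit Defensive.

Section Aux.
Variable R : realType.
Local Notation C := (Cplx R).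

Definition su n (N : 'M[C]_n) := forall a c : 'I_n, (c <= a)%N -> N a c = 0.

Lemma upperM n (A B : 'M[C]_n) : upper A -> upper B -> upper (A *m B).
Proof.
move=> uA uB a c ca; rewrite mxE big1 // => e _.
case: (ltnP e a) => ea; first by rewrite uA ?mul0r.
by rewrite uB ?mulr0 // (leq_trans ca ea).
Qed.

Lemma diagM n (A B : 'M[C]_n) a : upper A -> upper B -> (A *m B) a a = A a a * B a a.
Proof.
move=> uA uB; rewrite mxE (bigD1 a) //= big1 ?addr0 // => e ne.
case: (ltngtP e a) => ea; first by rewrite uA ?mul0r.
  by rewrite uB ?mulr0.
by move: ne; rewrite (ord_inj ea) eqxx.
Qed.

Lemma upperD n (A B : 'M[C]_n) : upper A -> upper B -> upper (A + B).
Proof. by move=> uA uB a c ca; rewrite mxE uA ?uB ?addr0. Qed.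
Lemma upperN n (A : 'M[C]_n) : upper A -> upper (- A).
Proof. by move=> uA a c ca; rewrite mxE uA ?oppr0. Qed.
Lemma upperB n (A B : 'M[C]_n) : upper A -> upper B -> upper (A - B).
Proof. by move=> uA uB; apply: upperD => //; apply: upperN. Qed.
Lemma upperC n (x : C) : upper (x%:M : 'M[C]_n).
Proof. by move=> a c ca; rewrite mxE; case: eqP => // ac; move: ca; rewrite ac ltnn. Qed.
Lemma upperZ n (x : C) (A : 'M[C]_n) : upper A -> upper (x *: A).
Proof. by move=> uA a c ca; rewrite mxE uA ?mulr0. Qed.

Lemma upper_prod n (I : Type) (s : seq I) (P : pred I) (F : I -> 'M[C]_n) :
  (forall k, upper (F k)) -> upper (\prod_(k <- s | P k) F k).
Proof.
move=> uF; apply: (big_ind (fun M : 'M[C]_n => upper M)) => //.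
  by rewrite -idmxE; apply: upperC.
by move=> A B uA uB; rewrite -mulmxE; apply: upperM.
Qed.

Lemma diag_prod n (I : Type) (s : seq I) (P : pred I) (F : I -> 'M[C]_n) a :
  (forall k, upper (F k)) -> (\prod_(k <- s | P k) F k) a a = \prod_(k <- s | P k) F k a a.
Proof.
move=> uF.
have [] := @big_ind2 _ _ (fun (M : 'M[C]_n) (d : C) => upper M /\ M a a = d)
   1 *%R 1 *%R _ _ _ s P F (fun k => F k a a) => //.
- by rewrite -idmxE; split; [apply: upperC | rewrite mxE eqxx].
- move=> A d B d' [uA <-] [uB <-]; rewrite -mulmxE; split; first exact: upperM.
  exact: diagM.
Qed.

Lemma lower_modnp n (M : 'M[C]_n) : lower (modnp M).
Proof. by move=> a c ac; rewrite mxE leqNgt ac. Qed.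

Lemma modnpD n (A B : 'M[C]_n) : modnp (A + B) = modnp A + modnp B.
Proof. by apply/matrixP => a c; rewrite !mxE; case: ifP; rewrite ?addr0. Qed.
Lemma modnpN n (A : 'M[C]_n) : modnp (- A) = - modnp A.
Proof. by apply/matrixP => a c; rewrite !mxE; case: ifP; rewrite ?oppr0. Qed.
Lemma modnpB n (A B : 'M[C]_n) : modnp (A - B) = modnp A - modnp B.
Proof. by rewrite modnpD modnpN. Qed.
Lemma modnp_su0 n (N : 'M[C]_n) : su N -> modnp N = 0.
Proof. by move=> sN; apply/matrixP => a c; rewrite !mxE; case: ifP => // /sN. Qed.
Lemma su_modnp n (M : 'M[C]_n) : su (M - modnp M).
Proof. by move=> a c ca; rewrite !mxE ca subrr. Qed.
Lemma modnp_id n (M : 'M[C]_n) : lower M -> modnp M = M.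
Proof.
move=> lM; apply/matrixP => a c; rewrite !mxE; case: leqP => // ac.
by rewrite lM.
Qed.

Lemma su_mull n (U N : 'M[C]_n) : upper U -> su N -> su (U *m N).
Proof.
move=> uU sN a c ca; rewrite mxE big1 // => e _.
case: (ltnP e a) => ea; first by rewrite uU ?mul0r.
by rewrite sN ?mulr0 // (leq_trans ca ea).
Qed.
Lemma su_mulr n (U N : 'M[C]_n) : su N -> upper U -> su (N *m U).
Proof.
move=> sN uU a c ca; rewrite mxE big1 // => e _.
case: (leqP e a) => ea; first by rewrite sN ?mul0r.
by rewrite uU ?mulr0 // (leq_ltn_trans ca ea).
Qed.

Lemma modnp_conj n (U U' M : 'M[C]_n) : upper U -> upper U' ->
  modnp (U *m modnp M *m U') = modnp (U *m M *m U').
Proof.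
move=> uU uU'.
have -> : U *m M *m U' = U *m modnp M *m U' + U *m (M - modnp M) *m U'.
  by rewrite -mulmxDl -mulmxDr addrC subrK.
have e0 := modnp_su0 (su_mulr (su_mull uU (su_modnp M)) uU').
by rewrite modnpD e0 addr0.
Qed.

Lemma tr_modnp n (U M : 'M[C]_n) : upper U -> \tr (U *m modnp M) = \tr (U *m M).
Proof.
move=> uU; rewrite /mxtrace; apply: eq_bigr => a _; rewrite !mxE.
apply: eq_bigr => c _; rewrite !mxE; case: leqP => // ca.
by rewrite uU ?mul0r.
Qed.

Lemma upper_diag_neq0 n (b : 'M[C]_n) a : upper b -> b \in unitmx -> b a a != 0.
Proof.
move=> ub; rewrite unitmxE unitfE -det_tr det_trig.
  by move=> /prodf_neq0 /(_ a isT); rewrite mxE.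
by apply/is_trig_mxP => i j ij; rewrite mxE ub.
Qed.

Lemma upper_inv n (b : 'M[C]_n) : upper b -> b \in unitmx -> upper (invmx b).
Proof.
move=> ub bu a.
suff H : forall m (d : 'I_n), (d < m)%N -> (d < a)%N -> invmx b a d = 0.
  by move=> d; apply: (H d.+1).
elim=> // m IH d dm da.
have := mulVmx bu; move/matrixP/(_ a d); rewrite !mxE.
have -> : (a == d) = false by apply/negP => /eqP ad; move: da; rewrite ad ltnn.
rewrite (bigD1 d) //= big1 ?addr0.
  by move/eqP; rewrite mulf_eq0 (negbTE (upper_diag_neq0 d ub bu)) orbF => /eqP.
move=> e ne; case: (ltngtP e d) => ed.
- rewrite IH ?mul0r //; lia.
- by rewrite ub ?mulr0.
- by move: ne; rewrite (ord_inj ed) eqxx.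
Qed.

Lemma invmx_diag n (b : 'M[C]_n) a : upper b -> b \in unitmx -> invmx b a a * b a a = 1.
Proof.
move=> ub bu; rewrite -diagM ?mulVmx //; first by rewrite mxE eqxx.
exact: upper_inv.
Qed.

End Aux.

Section PartB.
Variable R : realType.
Local Notation C := (Cplx R).

Lemma lk_upper n (r : 'M[C]_n) k : upper r -> upper (lk r k).
Proof. by move=> ur; apply: upperB => //; apply: upperC. Qed.

Lemma Lprod_upper n (r : 'M[C]_n) i : upper r -> upper (Lprod r i).
Proof. by move=> ur; apply: upper_prod => k; apply: lk_upper. Qed.

Lemma Lmat_upper n (r : 'M[C]_n) i : upper r -> upper (Lmat r i).
Proof. by move=> ur; apply: upperZ; apply: Lprod_upper. Qed.

Lemma Lprod_diag n (r : 'M[C]_n) i a : upper r ->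
  Lprod r i a a = \prod_(k < n | k != i) (r a a - r k k).
Proof.
move=> ur; rewrite /Lprod diag_prod; last by move=> k; apply: lk_upper.
by apply: eq_bigr => k _; rewrite /lk !mxE eqxx mulr1n.
Qed.

Lemma Lprod_diag0 n (r : 'M[C]_n) i a : upper r -> a != i -> Lprod r i a a = 0.
Proof.
by move=> ur ai; rewrite Lprod_diag // (bigD1 a) //= subrr mul0r.
Qed.

Lemma trLprod n (r : 'M[C]_n) i : upper r ->
  \tr (Lprod r i) = \prod_(k < n | k != i) (r i i - r k k).
Proof.
move=> ur; rewrite /mxtrace (bigD1 i) //= big1 ?addr0; first exact: Lprod_diag.
by move=> a ai; apply: Lprod_diag0.
Qed.

Definition distinct_diag n (r : 'M[C]_n) := forall a c : 'I_n, a != c -> r a a != r c c.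

Lemma trLprod_neq0 n (r : 'M[C]_n) i : upper r -> distinct_diag r ->
  \tr (Lprod r i) != 0.
Proof.
move=> ur dr; rewrite trLprod //; apply/prodf_neq0 => k ki.
by rewrite subr_eq0; apply: dr; rewrite eq_sym.
Qed.

Lemma Lmat_diag n (r : 'M[C]_n) i a : upper r -> distinct_diag r ->
  Lmat r i a a = (a == i)%:R.
Proof.
move=> ur dr; rewrite /Lmat mxE; case: eqP => [->|/eqP ai].
  by rewrite Lprod_diag // -trLprod // mulVf //; apply: trLprod_neq0.
by rewrite Lprod_diag0 // mulr0.
Qed.

Lemma sprimeE n (r s : 'M[C]_n) i :
  sprime r s i = (\tr (Lprod r i))^-1 * \tr (Lprod r i *m s).
Proof. by rewrite /sprime /Lmat -scalemxAl mxtraceZ. Qed.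

Lemma conj_diag n (b r : 'M[C]_n) a : inB b -> upper r ->
  (b *m r *m invmx b) a a = r a a.
Proof.
move=> [ub bu] ur; rewrite diagM ?diagM //; last exact: upper_inv.
  by rewrite mulrAC [b a a * _]mulrC invmx_diag // mul1r.
exact: upperM.
Qed.

Lemma Lprod_conj n (b r : 'M[C]_n) i : inB b -> upper r ->
  Lprod (b *m r *m invmx b) i = b *m Lprod r i *m invmx b.
Proof.
move=> bB ur; have [ub bu] := bB; rewrite /Lprod.
pose f := fun X : 'M[C]_n => b *m X *m invmx b.
have fM : {morph f : X Y / X * Y >-> X * Y}.
  have h : invmx b *m b = 1%:M := mulVmx bu.
  move=> X Y; rewrite /f -!mulmxE !mulmxA.
  have e : b *m X *m invmx b *m b = b *m X by rewrite -mulmxA h mulmx1.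
  by rewrite e.
have f1 : f 1 = 1 by rewrite /f -idmxE mulmx1 mulmxV.
transitivity (f (\prod_(k < n | k != i) lk r k)); last by [].
rewrite (big_morph f fM f1); apply: eq_bigr => k _.
rewrite /f /lk (conj_diag k bB ur).
by rewrite mulmxBr mulmxBl mul_mx_scalar -scalemxAl mulmxV // scalemx1.
Qed.

Lemma Pmap_act n (b : 'M[C]_n) (x : bquad R n) : inB b -> upper (pr_r x) ->
  Pmap (act b x) = Pmap x.
Proof.
move=> bB ur; have [ub bu] := bB.
have h : invmx b *m b = 1%:M := mulVmx bu.
rewrite /Pmap /=; congr (_, _); apply/rowP => k; rewrite [LHS]mxE [RHS]mxE.
  exact: conj_diag.
rewrite /sprime /Lmat /pr_r /pr_s /=.
rewrite tr_modnp; last first.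
  apply: upperZ; apply: Lprod_upper; apply: upperM; first exact: upperM.
  exact: upper_inv.
rewrite Lprod_conj // -!scalemxAl !mxtraceZ; congr (_^-1 * _).
  by rewrite mxtrace_mulC mulmxA h mul1mx.
have e : b *m Lprod (pr_r x) k *m invmx b *m b = b *m Lprod (pr_r x) k.
  by rewrite -mulmxA h mulmx1.
rewrite !mulmxA e.
rewrite -!mulmxA mxtrace_mulC !mulmxA.
by rewrite -[_ *m _ *m invmx b *m b]mulmxA h mulmx1.
Qed.

End PartB.

Section PartC.
Variable R : realType.
Local Notation C := (Cplx R).

Lemma pf_opp n (f : bquad R n -> C) : polyfun f -> polyfun (fun x => - f x).
Proof.
move=> pf; have -> : (fun x => - f x) = (fun x => (-1) * f x).
  by apply: funext => x; rewrite mulN1r.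
by apply: pf_mul => //; apply: pf_const.
Qed.

Lemma pf_sum n (I : Type) (s : seq I) (P : pred I) (F : I -> bquad R n -> C) :
  (forall i, polyfun (F i)) -> polyfun (fun x => \sum_(i <- s | P i) F i x).
Proof.
move=> pF; elim: s => [|i s IH].
  have -> : (fun x => \sum_(i <- [::] | P i) F i x) = (fun _ => 0).
    by apply: funext => x; rewrite big_nil.
  exact: pf_const.
case Pi: (P i).
  have -> : (fun x => \sum_(j <- i :: s | P j) F j x) =
            (fun x => F i x + \sum_(j <- s | P j) F j x).
    by apply: funext => x; rewrite big_cons Pi.
  exact: pf_add.
have -> : (fun x => \sum_(j <- i :: s | P j) F j x) =
          (fun x => \sum_(j <- s | P j) F j x).
  by apply: funext => x; rewrite big_cons Pi.
exact: IH.
Qed.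

Definition pmx n (M : bquad R n -> 'M[C]_n) := forall a c, polyfun (fun x => M x a c).

Lemma pmx_mul n (A B : bquad R n -> 'M[C]_n) : pmx A -> pmx B -> pmx (fun x => A x *m B x).
Proof.
move=> pA pB a c.
have -> : (fun x => (A x *m B x) a c) = (fun x => \sum_j A x a j * B x j c).
  by apply: funext => x; rewrite mxE.
by apply: pf_sum => j; apply: pf_mul.
Qed.

Lemma pmx_add n (A B : bquad R n -> 'M[C]_n) : pmx A -> pmx B -> pmx (fun x => A x + B x).
Proof.
move=> pA pB a c.
have -> : (fun x => (A x + B x) a c) = (fun x => A x a c + B x a c).
  by apply: funext => x; rewrite mxE.
exact: pf_add.
Qed.

Lemma pmx_opp n (A : bquad R n -> 'M[C]_n) : pmx A -> pmx (fun x => - A x).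
Proof.
move=> pA a c.
have -> : (fun x => (- A x) a c) = (fun x => - A x a c).
  by apply: funext => x; rewrite mxE.
exact: pf_opp.
Qed.

Lemma pmx_scalar n (f : bquad R n -> C) : polyfun f -> pmx (fun x => (f x)%:M).
Proof.
move=> pf a c.
have -> : (fun x => ((f x)%:M : 'M[C]_n) a c) = (fun x => f x * (a == c)%:R).
  by apply: funext => x; rewrite mxE mulr_natr.
by apply: pf_mul => //; apply: pf_const.
Qed.

Lemma pmx_prod n (I : Type) (s : seq I) (P : pred I) (F : I -> bquad R n -> 'M[C]_n) :
  (forall i, pmx (F i)) -> pmx (fun x => \prod_(i <- s | P i) F i x).
Proof.
move=> pF; elim: s => [|i s IH].
  have -> : (fun x => \prod_(i <- [::] | P i) F i x) = (fun _ => (1 : C)%:M).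
    by apply: funext => x; rewrite big_nil idmxE.
  by apply: pmx_scalar; apply: pf_const.
case Pi: (P i).
  have -> : (fun x => \prod_(j <- i :: s | P j) F j x) =
            (fun x => F i x *m \prod_(j <- s | P j) F j x).
    by apply: funext => x; rewrite big_cons Pi mulmxE.
  exact: pmx_mul.
have -> : (fun x => \prod_(j <- i :: s | P j) F j x) =
          (fun x => \prod_(j <- s | P j) F j x).
  by apply: funext => x; rewrite big_cons Pi.
exact: IH.
Qed.

Lemma pf_tr n (A : bquad R n -> 'M[C]_n) : pmx A -> polyfun (fun x => \tr (A x)).
Proof. by move=> pA; apply: pf_sum => a; apply: pA. Qed.

Lemma pmx_Lprod n (i : 'I_n) : pmx (fun x : bquad R n => Lprod (pr_r x) i).
Proof.
apply: pmx_prod => k; rewrite /lk; apply: pmx_add; first by move=> a c; apply: pf_r.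
by apply: pmx_opp; apply: pmx_scalar; apply: pf_r.
Qed.

Lemma regular1 n (k : 'I_n) : regular_on (@rss_zero R n) (fun x => (Pmap x).1 0 k).
Proof.
exists (fun x => pr_r x k k), (fun _ => 1); split; first exact: pf_r.
split; first exact: pf_const.
by move=> x _; rewrite oner_neq0 divr1 /Pmap /= mxE.
Qed.

Lemma regular2 n (k : 'I_n) : regular_on (@rss_zero R n) (fun x => (Pmap x).2 0 k).
Proof.
exists (fun x => \tr (Lprod (pr_r x) k *m pr_s x)), (fun x => \tr (Lprod (pr_r x) k)).
split; first by apply: pf_tr; apply: pmx_mul; [apply: pmx_Lprod | move=> a c; apply: pf_s].
split; first by apply: pf_tr; apply: pmx_Lprod.
move=> x [ur [ls [m0 dr]]]; split; first exact: trLprod_neq0.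
by rewrite /Pmap /= mxE sprimeE mulrC.
Qed.

End PartC.

Section PartD.
Variable R : realType.
Local Notation C := (Cplx R).

Lemma diag_mul n (u v : 'rV[C]_n) :
  diag_mx u *m diag_mx v = diag_mx (\row_a (u 0 a * v 0 a)).
Proof.
by apply/matrixP => a c; rewrite mul_diag_mx !mxE mulrnAr.
Qed.

Lemma diag_prod_mx n (I : Type) (s : seq I) (P : pred I) (F : I -> 'rV[C]_n) :
  \prod_(k <- s | P k) diag_mx (F k) = diag_mx (\row_a \prod_(k <- s | P k) F k 0 a).
Proof.
elim: s => [|i s IH].
  rewrite big_nil -idmxE -diag_const_mx; congr diag_mx.
  by apply/rowP => a; rewrite !mxE big_nil.
rewrite !big_cons; case Pi: (P i); last first.
  by rewrite IH; congr diag_mx; apply/rowP => a; rewrite !mxE big_cons Pi.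
rewrite IH -mulmxE diag_mul; congr diag_mx.
by apply/rowP => a; rewrite !mxE big_cons Pi.
Qed.

Lemma diag_entry n (d : 'rV[C]_n) a c : diag_mx d a c = d 0 a *+ (a == c).
Proof. by rewrite mxE. Qed.

Lemma tr_diag_mul n (u : 'rV[C]_n) (S : 'M[C]_n) :
  \tr (diag_mx u *m S) = \sum_a u 0 a * S a a.
Proof. by rewrite mul_diag_mx /mxtrace; apply: eq_bigr => a _; rewrite mxE. Qed.

Definition distinct_row n (d : 'rV[C]_n) := forall a c : 'I_n, a != c -> d 0 a != d 0 c.

Lemma Lprod_diag_mx n (d : 'rV[C]_n) i :
  Lprod (diag_mx d) i = diag_mx (\row_a \prod_(k < n | k != i) (d 0 a - d 0 k)).
Proof.
rewrite /Lprod (eq_bigr (fun k => diag_mx (\row_a (d 0 a - d 0 k)))); last first.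
  move=> k _; rewrite /lk diag_entry eqxx mulr1n -diag_const_mx -linearB /=; congr diag_mx.
  by apply/rowP => a; rewrite !mxE.
rewrite diag_prod_mx; congr diag_mx; apply/rowP => a; rewrite !mxE.
by apply: eq_bigr => k _; rewrite mxE.
Qed.

Lemma sprime_diag n (d : 'rV[C]_n) (S : 'M[C]_n) i : distinct_row d ->
  sprime (diag_mx d) S i = S i i.
Proof.
move=> dd; rewrite sprimeE Lprod_diag_mx -[X in \tr X]mulmx1 !tr_diag_mul.
rewrite (bigD1 i) //= big1; last first.
  by move=> a ai; rewrite mxE (bigD1 a) //= subrr mul0r mul0r.
rewrite (bigD1 i) //= big1; last first.
  by move=> a ai; rewrite mxE (bigD1 a) //= subrr mul0r mul0r.
rewrite !addr0 !mxE eqxx mulr1n mulr1 mulrA mulVf ?mul1r //.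
apply/prodf_neq0 => k ki; rewrite subr_eq0; apply: dd; by rewrite eq_sym.
Qed.

Definition diagpt n (xs ys : 'rV[C]_n) : bquad R n := (diag_mx xs, diag_mx ys, 0, 0).

Lemma rss_diag n (xs ys : 'rV[C]_n) : distinct_row xs -> rss_zero (diagpt xs ys).
Proof.
move=> dx; rewrite /rss_zero /diagpt /pr_r /pr_s /pr_i /pr_j /=; split.
  by move=> a c ca; rewrite diag_entry; case: eqP => // ac; move: ca; rewrite ac ltnn.
split.
  by move=> a c ca; rewrite diag_entry; case: eqP => // ac; move: ca; rewrite ac ltnn.
split.
  rewrite /mu /pr_r /pr_s /pr_i /pr_j /= mul0mx addr0 !diag_mul.
  have -> : (\row_a (ys 0 a * xs 0 a)) = (\row_a (xs 0 a * ys 0 a)).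
    by apply/rowP => a; rewrite !mxE mulrC.
  by rewrite subrr; apply: modnp_su0 => a c _; rewrite mxE.
by move=> a c ac; rewrite !diag_entry !eqxx !mulr1n; apply: dx.
Qed.

Lemma Pmap_diag n (xs ys : 'rV[C]_n) : distinct_row xs -> Pmap (diagpt xs ys) = (xs, ys).
Proof.
move=> dx; rewrite /Pmap /diagpt /pr_r /pr_s /=; congr (_, _); apply/rowP => k.
  by rewrite mxE diag_entry eqxx mulr1n.
by rewrite mxE sprime_diag // diag_entry eqxx mulr1n.
Qed.

End PartD.

Section PartE.
Variable R : realType.
Local Notation C := (Cplx R).

Lemma nilp n' (r : 'M[C]_n'.+1) : upper r -> \prod_(k < n'.+1) lk r k = 0.
Proof.
move=> ur.
rewrite (eq_bigr (fun k : 'I_n'.+1 => lk r (inord (val k)))); last by move=> k _; rewrite inord_val.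
rewrite -(big_mkord xpredT (fun k => lk r (inord k))).
suff H : forall m, (m <= n'.+1)%N -> forall a c : 'I_n'.+1, (c < m)%N ->
    (\prod_(0 <= k < m) lk r (inord k)) a c = 0.
  by apply/matrixP => a c; rewrite mxE; apply: H.
elim=> [|m IH] mn a c cm //.
have mE : forall A B : 'M[C]_n'.+1, (A * B) a c = \sum_e A a e * B e c.
  by move=> A B; rewrite -mulmxE mxE.
rewrite big_nat_recr //= mE big1 // => e _.
case: (ltnP e m) => em.
  have -> : (\prod_(0 <= i < m) lk r (inord i)) a e = 0 by apply: IH; lia.
  by rewrite mul0r.
case: (ltnP c e) => ce; first by rewrite (lk_upper _ ur) ?mulr0.
have ee : (e : nat) = m by lia.
have ec : e = c by apply: ord_inj; lia.
rewrite /lk !mxE -ec eqxx mulr1n.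
have -> : (inord m : 'I_n'.+1) = e by rewrite -ee inord_val.
by rewrite subrr mulr0.
Qed.

Lemma rLprod n (r : 'M[C]_n) c : upper r -> r *m Lprod r c = r c c *: Lprod r c.
Proof.
case: n r c => [|n'] r c; first by case: c.
move=> ur.
pose p := fun k : 'I_n'.+1 => ('X - (r k k)%:P : {poly C}).
have hL : forall P : pred 'I_n'.+1, horner_mx r (\prod_(k | P k) p k) = \prod_(k | P k) lk r k.
  move=> P; rewrite rmorph_prod; apply: eq_bigr => k _.
  by rewrite /p rmorphB /= horner_mx_X horner_mx_C.
have h0 : (r - (r c c)%:M) *m Lprod r c = 0.
  rewrite /Lprod -hL mulmxE.
  have -> : r - (r c c)%:M = horner_mx r (p c) by rewrite /p rmorphB /= horner_mx_X horner_mx_C.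
  rewrite -rmorphM /= (_ : p c * _ = \prod_k p k); last by rewrite [RHS](bigD1 c).
  by rewrite hL nilp.
by rewrite -{1}(subrK ((r c c)%:M) r) mulmxDl h0 add0r mul_scalar_mx.
Qed.

End PartE.

Section PartF.
Variable R : realType.
Local Notation C := (Cplx R).

Definition Vmx n (r : 'M[C]_n) : 'M[C]_n := \matrix_(a, c) Lmat r c a c.

Lemma VmxE n (r : 'M[C]_n) a c : Vmx r a c = Lmat r c a c.
Proof. by rewrite /Vmx [LHS]mxE. Qed.

Lemma Vmx_upper n (r : 'M[C]_n) : upper r -> upper (Vmx r).
Proof. by move=> ur a c ca; rewrite VmxE (Lmat_upper c ur). Qed.

Lemma Vmx_unit n (r : 'M[C]_n) : upper r -> distinct_diag r -> Vmx r \in unitmx.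
Proof.
move=> ur dr; rewrite unitmxE unitfE -det_tr det_trig.
  apply/prodf_neq0 => a _; rewrite (_ : (Vmx r)^T a a = Vmx r a a); last by rewrite [LHS]mxE.
  by rewrite VmxE Lmat_diag // eqxx oner_neq0.
by apply/is_trig_mxP => i j ij; rewrite [LHS]mxE (Vmx_upper ur).
Qed.

Lemma Vmx_eig n (r : 'M[C]_n) : upper r ->
  r *m Vmx r = Vmx r *m diag_mx (\row_a r a a).
Proof.
move=> ur; apply/matrixP => a c; rewrite mul_mx_diag !mxE.
have -> : \sum_j r a j * Vmx r j c = (r *m Lmat r c) a c.
  by rewrite mxE; apply: eq_bigr => j _; rewrite mxE.
by rewrite /Lmat -scalemxAr rLprod // scalerA mxE mulrAC.
Qed.

Lemma invmx_uniq' n (A B : 'M[C]_n) : A *m B = 1%:M -> invmx A = B.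
Proof.
move=> AB; have [Au Bu] := mulmx1_unit AB.
have h : invmx A *m A = 1%:M := mulVmx Au.
by rewrite -[invmx A]mulmx1 -AB mulmxA h mul1mx.
Qed.

Lemma invmxM' n (A B : 'M[C]_n) : A \in unitmx -> B \in unitmx ->
  invmx (A *m B) = invmx B *m invmx A.
Proof.
move=> Au Bu; apply: invmx_uniq'.
have h1 : A *m invmx A = 1%:M := mulmxV Au.
have h2 : B *m invmx B = 1%:M := mulmxV Bu.
by rewrite mulmxA -[A *m B *m invmx B]mulmxA h2 mulmx1 h1.
Qed.

Lemma inBM n (b b' : 'M[C]_n) : inB b -> inB b' -> inB (b *m b').
Proof. by move=> [ub bu] [ub' bu']; split; [apply: upperM | rewrite unitmx_mul bu bu']. Qed.

Lemma act_comp n (b b' : 'M[C]_n) (x : bquad R n) : inB b -> inB b' ->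
  act b (act b' x) = act (b *m b') x.
Proof.
move=> [ub bu] [ub' bu']; rewrite /act /pr_r /pr_s /pr_i /pr_j /= invmxM' //.
congr (_, _, _, _); rewrite ?mulmxA //.
rewrite modnp_conj //; last exact: upper_inv.
by rewrite !mulmxA.
Qed.

Lemma inB_inv n (b : 'M[C]_n) : inB b -> inB (invmx b).
Proof. by move=> [ub bu]; split; [apply: upper_inv | rewrite unitmx_inv]. Qed.

Lemma modnp_l n (U M : 'M[C]_n) : upper U -> modnp (U *m modnp M) = modnp (U *m M).
Proof.
move=> uU; have := @modnp_conj R n U 1%:M M uU (@upperC R n 1).
by rewrite !mulmx1.
Qed.

Lemma modnp_r n (U M : 'M[C]_n) : upper U -> modnp (modnp M *m U) = modnp (M *m U).
Proof.
move=> uU; have := @modnp_conj R n 1%:M U M (@upperC R n 1) uU.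
by rewrite !mul1mx.
Qed.

Lemma rss_act n (b : 'M[C]_n) (x : bquad R n) : inB b -> rss_zero x -> rss_zero (act b x).
Proof.
move=> bB [ur [ls [m0 dr]]]; have [ub bu] := bB.
have uc := upper_inv ub bu.
have h : invmx b *m b = 1%:M := mulVmx bu.
have ur' : upper (b *m pr_r x *m invmx b) by apply: upperM => //; apply: upperM.
split; first exact: ur'.
split; first exact: lower_modnp.
split; last first.
  move=> a c ac; rewrite /act /pr_r /= (conj_diag a bB ur) (conj_diag c bB ur).
  exact: dr.
rewrite /mu /act /pr_r /pr_s /pr_i /pr_j /=.
rewrite -/(pr_r x) -/(pr_s x) -/(pr_i x) -/(pr_j x).
set r' := b *m pr_r x *m invmx b; set S' := b *m pr_s x *m invmx b.
rewrite !modnpD !modnpN modnp_l // modnp_r //.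
rewrite -!modnpN -!modnpD.
have -> : r' *m S' - S' *m r' + b *m pr_i x *m (pr_j x *m invmx b) =
    b *m (pr_r x *m pr_s x - pr_s x *m pr_r x + pr_i x *m pr_j x) *m invmx b.
  rewrite /r' /S' !(mulmxDr, mulmxDl, mulmxN, mulNmx, mulmxA).
  have e1 : b *m pr_r x *m invmx b *m b = b *m pr_r x by rewrite -mulmxA h mulmx1.
  have e2 : b *m pr_s x *m invmx b *m b = b *m pr_s x by rewrite -mulmxA h mulmx1.
  by rewrite e1 e2.
rewrite -modnp_conj //; move: m0; rewrite /mu => ->.
by rewrite mulmx0 mul0mx; apply: modnp_su0 => a c _; rewrite mxE.
Qed.

End PartF.

Section PartG.
Variable R : realType.
Local Notation C := (Cplx R).

Lemma conj_diag_entry n (u v : 'rV[C]_n) (M : 'M[C]_n) a c :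
  (diag_mx u *m M *m diag_mx v) a c = u 0 a * M a c * v 0 c.
Proof. by rewrite mul_mx_diag mxE mul_diag_mx mxE. Qed.

Definition ptE n (x1 : bquad R n) (e : C) : bquad R n :=
  (pr_r x1, diag_mx (\row_a pr_s x1 a a) + (e * e) *: (pr_s x1 - diag_mx (\row_a pr_s x1 a a)),
   e *: pr_i x1, e *: pr_j x1).

Lemma torus n (x1 : bquad R n) (dv : 'rV[C]_n) (e : C) :
  rss_zero x1 -> pr_r x1 = diag_mx dv -> e != 0 ->
  exists2 t, inB t & act t x1 = ptE x1 e.
Proof.
move=> [ur [ls [m0 dr]]] hD e0.
have ddv : forall a c, a != c -> dv 0 a != dv 0 c.
  by move=> a c ac; have := dr a c ac; rewrite hD !diag_entry !eqxx !mulr1n.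
set s1 := pr_s x1; set i1 := pr_i x1; set j1 := pr_j x1.
have key : forall a c : 'I_n, (c <= a)%N ->
    dv 0 a * s1 a c - s1 a c * dv 0 c + i1 a 0 * j1 0 c = 0.
  move=> a c ca; move: m0; rewrite /mu hD => /matrixP /(_ a c).
  rewrite [LHS]mxE [RHS]mxE ca mul_diag_mx mul_mx_diag !mxE big_ord1 => ->; done.
have ij0 : forall c, i1 c 0 * j1 0 c = 0.
  by move=> c; have := key c c (leqnn c); rewrite [dv 0 c * _]mulrC subrr add0r.
have s0 : forall a c : 'I_n, (c < a)%N -> i1 a 0 * j1 0 c = 0 -> s1 a c = 0.
  move=> a c ca h; have := key a c (ltnW ca); rewrite h addr0.
  rewrite [dv 0 a * _]mulrC -mulrBr => /eqP; rewrite mulf_eq0 subr_eq0.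
  have ac : a != c by apply/eqP => ac; move: ca; rewrite ac ltnn.
  by rewrite (negbTE (ddv a c ac)) orbF => /eqP.
pose tau := fun a : 'I_n => if i1 a 0 == 0 then e^-1 else e.
have tau0 : forall a, tau a != 0.
  by move=> a; rewrite /tau; case: ifP => _ //; rewrite invr_eq0.
pose t := diag_mx (\row_a tau a); pose t' := diag_mx (\row_a (tau a)^-1).
have tt' : t *m t' = 1%:M.
  rewrite /t /t' diag_mul -diag_const_mx; congr diag_mx; apply/rowP => a.
  by rewrite !mxE mulfV.
have tu : t \in unitmx by case: (mulmx1_unit tt').
have it : invmx t = t' := invmx_uniq' tt'.
have ut : upper t by move=> a c ca; rewrite diag_entry; case: eqP => // ac; move: ca; rewrite ac ltnn.
exists t; first by split.
rewrite /act it /ptE; congr (_, _, _, _).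
- apply/matrixP => a c; rewrite hD /t /t' conj_diag_entry !diag_entry !mxE.
  case: eqP => [<-|_]; last by rewrite !mulr0n mulr0 mul0r.
  by rewrite !mulr1n mulrAC mulfV ?mul1r.
- apply/matrixP => a c; rewrite [LHS]mxE /t /t' conj_diag_entry.
  rewrite !mxE -/s1.
  case: (leqP c a) => ca.
    case: (eqVneq a c) => [<-|ac].
      by rewrite !mulr1n subrr mulr0 addr0 mulrAC mulfV ?mul1r.
    have ca' : (c < a)%N by rewrite ltn_neqAle ca andbT eq_sym.
    rewrite !mulr0n subr0 add0r.
    case ia: (i1 a 0 == 0).
      have sac : s1 a c = 0 by apply: s0 => //; rewrite (eqP ia) mul0r.
      by rewrite sac !mulr0 !mul0r.
    case ic: (i1 c 0 == 0).
      by rewrite /tau ia ic invrK mulrAC.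
    have jc : j1 0 c = 0.
      by have := ij0 c; move/eqP; rewrite mulf_eq0 ic orFb => /eqP.
    have sac : s1 a c = 0 by apply: s0 => //; rewrite jc mulr0.
    by rewrite sac !mulr0 !mul0r.
  have ac : (a == c) = false by apply/negP => /eqP ac; move: ca; rewrite ac ltnn.
  by rewrite ac !mulr0n subr0 add0r ls // mulr0.
- apply/matrixP => a z; rewrite (ord1 z) /t mul_diag_mx !mxE -/i1 /tau.
  by case ia: (i1 a 0 == 0); [rewrite (eqP ia) !mulr0 | ].
- apply/matrixP => z c; rewrite (ord1 z) /t' mul_mx_diag !mxE -/j1 /tau.
  case ic: (i1 c 0 == 0); first by rewrite invrK mulrC.
  have jc : j1 0 c = 0.
    by have := ij0 c; move/eqP; rewrite mulf_eq0 ic orFb => /eqP.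
  by rewrite jc mul0r mulr0.
Qed.

End PartG.

Section PartH.
Variable R : realType.
Local Notation C := (Cplx R).

Lemma dd_Pmap n (x : bquad R n) : rss_zero x -> distinct_row (Pmap x).1.
Proof. by move=> [_ [_ [_ dr]]] a c ac; rewrite /Pmap /= !mxE; apply: dr. Qed.

Lemma closure_pt n (x : bquad R n) : rss_zero x ->
  closure (Borbit x) (diagpt (Pmap x).1 (Pmap x).2).
Proof.
move=> rx; have [ur [ls [m0 dr]]] := rx.
have Vu := Vmx_unit ur dr.
have VB : inB (Vmx (pr_r x)) by split; [apply: Vmx_upper | ].
have WB := inB_inv VB.
set x1 := act (invmx (Vmx (pr_r x))) x.
have h : invmx (Vmx (pr_r x)) *m Vmx (pr_r x) = 1%:M := mulVmx Vu.
have r1 : pr_r x1 = diag_mx (Pmap x).1.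
  rewrite /x1 /act /pr_r /= invmxK -/(pr_r x).
  by rewrite -mulmxA Vmx_eig // mulmxA h mul1mx.
have rx1 := rss_act WB rx.
have P1 : Pmap x1 = Pmap x := Pmap_act WB ur.
have dd := dd_Pmap rx.
have hD : diag_mx (\row_a pr_s x1 a a) = diag_mx (Pmap x).2.
  have e2 : forall a, (Pmap x).2 0 a = pr_s x1 a a.
    move=> a; rewrite -P1 (_ : (Pmap x1).2 0 a = sprime (pr_r x1) (pr_s x1) a); last first.
      by rewrite /Pmap /= mxE.
    by rewrite r1 sprime_diag.
  by congr diag_mx; apply/rowP => a; rewrite e2 mxE.
rewrite closureEcvg.
pose p := ptE x1.
have p0 : p 0 = diagpt (Pmap x).1 (Pmap x).2.
  rewrite /p /ptE /diagpt r1 hD !scale0r mulr0 scale0r addr0 //.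
have cp : p e @[e --> (0 : C)^'] --> p 0.
  rewrite /p /ptE; apply: (cvg_pair (G := nbhs _) (H := nbhs _)); last by apply: cvgZ; [exact: cvg_within | exact: cvg_cst].
  apply: (cvg_pair (G := nbhs _) (H := nbhs _)); last by apply: cvgZ; [exact: cvg_within | exact: cvg_cst].
  apply: (cvg_pair (G := nbhs _) (H := nbhs _)); first exact: cvg_cst.
  apply: cvgD; first exact: cvg_cst.
  apply: cvgZ; last exact: cvg_cst.
  by apply: (@cvgM _ _ _ _ id id); exact: cvg_within.
exists (p @ (0 : C)^'); first exact: fmap_proper_filter.
split; first by rewrite -p0.
move=> P HP; apply: filterS (nbhs_dnbhs_neq (0 : C)) => e e0.
apply: HP; have [t tB ht] := torus rx1 r1 e0.
exists (t *m invmx (Vmx (pr_r x))); first exact: inBM.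
by rewrite -act_comp.
Qed.

End PartH.

Theorem mainTheorem12 (R : realType) (n : nat) :
  (forall x : bquad R n, rss_zero x -> forall iota : 'I_n,
      \tr (Lprod (pr_r x) iota) != 0 /\
      (forall s0 : 'M[Cplx R]_n, modnp s0 = pr_s x ->
         \tr (Lmat (pr_r x) iota *m s0) = sprime (pr_r x) (pr_s x) iota)) /\
  (forall k : 'I_n,
      regular_on (@rss_zero R n) (fun x => (Pmap x).1 0 k) /\
      regular_on (@rss_zero R n) (fun x => (Pmap x).2 0 k)) /\
  (forall b (x : bquad R n), inB b -> rss_zero x -> Pmap (act b x) = Pmap x) /\
  (forall xs ys : 'rV[Cplx R]_n,
      (forall a c : 'I_n, a != c -> xs 0 a != xs 0 c) ->
      exists2 x, rss_zero x & Pmap x = (xs, ys)) /\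
  (forall x y : bquad R n, rss_zero x -> rss_zero y ->
      (closure (Borbit x) `&` @rss_zero R n) `&` (closure (Borbit y) `&` @rss_zero R n) = set0 ->
      Pmap x <> Pmap y).
Proof.
split.
  move=> x [ur [ls [m0 dr]]] i; split; first exact: trLprod_neq0.
  by move=> s0 hs; rewrite /sprime -hs tr_modnp //; apply: Lmat_upper.
split; first by move=> k; split; [exact: regular1 | exact: regular2].
split; first by move=> b x bB [ur _]; apply: Pmap_act.
split; first by move=> xs ys dx; exists (diagpt xs ys); [exact: rss_diag | exact: Pmap_diag].
move=> x y rx ry H Pxy.
have zx := closure_pt rx; have zy := closure_pt ry.
rewrite Pxy in zx.
have rz : rss_zero (diagpt (Pmap y).1 (Pmap y).2) by apply: rss_diag; apply: dd_Pmap.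
have : ((closure (Borbit x) `&` @rss_zero R n) `&` (closure (Borbit y) `&` @rss_zero R n))
   (diagpt (Pmap y).1 (Pmap y).2) by split; split.
by rewrite H.
Qed.
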